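(* Let $A$ be a unital algebra over $\mathbb{F}_2$ and let $\Omega^1$ extend to an exterior algebra $\Omega$ over $A$ at least up to degree 2 (product $\wedge$, differential ${\rm d}$ with ${\rm d}^2=0$ and graded Leibniz rule, generated by $A$ and ${\rm d} A$), and let $\theta\in\Omega^1$ satisfy ${\rm d}\theta=0$. Let $\bar A$ and $\bar\Omega^1$ be as follows: $\bar A$ is the set $A$ with $a\,\bar\cdot\,b=ab+a+b$, $a\,\bar+\,b=a+b+1$; $\bar\Omega^1$ is the set $\Omega^1$ with $\omega\,\bar+\,\eta=\theta+\omega+\eta$, $a\,\bar\cdot\,\omega=a\theta+(a+1)\omega$, $\omega\,\bar\cdot\,a=\theta a+\omega(a+1)$ and $\bar{\rm d} a=\theta+{\rm d} a$. (i) Let $\bar\Omega^2$ be the set $\Omega^2$ with $\omega\,\bar+\,\eta=\theta^2+\omega+\eta$, $a\,\bar\cdot\,\omega=a\theta^2+(a+1)\omega$, $\omega\,\bar\cdot\,a=\theta^2a+\omega(a+1)$ for $\omega,\eta\in\Omega^2$, $a\in A$, with product $\bar\Omega^1\times\bar\Omega^1\to\bar\Omega^2$ given by $\omega\,\bar\wedge\,\eta=\omega\wedge\eta+\theta\wedge\eta+\omega\wedge\theta$, and with $\bar{\rm d}\omega=\theta^2+{\rm d}\omega$ for $\omega\in\bar\Omega^1$ (where $\theta^2=\theta\wedge\theta$). Then $\bar A,\bar\Omega^1,\bar\Omega^2$ with these structures form the part up to degree 2 of an exterior algebra over $\bar A$. (ii) The map $\bar{\ }:\Omega^2\to\bar\Omega^2$,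 $\bar\omega=\theta^2+\omega$, together with $a\mapsto 1+a$ on $A$ and $\omega\mapsto\theta+\omega$ on $\Omega^1$, is a map of differential graded algebras up to degree 2.
   Context: Over $\mathbb{F}_2$ all signs in the graded Leibniz rule are irrelevant. A map of differential graded algebras up to degree 2 here means maps in degrees 0,1,2 that are additive, intertwine the products (including $\overline{\omega\wedge\eta}=\bar\omega\,\bar\wedge\,\bar\eta$ and the bimodule actions) and intertwine the differentials ($\overline{{\rm d} a}=\bar{\rm d}\bar a$, $\overline{{\rm d}\omega}=\bar{\rm d}\bar\omega$). *)

(* Defs.v *)
From Stdlib Require Import List.
Import ListNotations.

(* All operations are fields, so that the "barred" structures of the paper
   (same carriers, new operations) are again instances of this record. *)
Record dga2_ops (A O1 O2 : Type) := Dga2Ops {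
  addA : A -> A -> A;  mulA : A -> A -> A;  zeroA : A;  oneA : A;
  add1 : O1 -> O1 -> O1;  zero1 : O1;
  lmul1 : A -> O1 -> O1;  rmul1 : O1 -> A -> O1;
  add2 : O2 -> O2 -> O2;  zero2 : O2;
  lmul2 : A -> O2 -> O2;  rmul2 : O2 -> A -> O2;
  wedge : O1 -> O1 -> O2;
  dA : A -> O1;  d1 : O1 -> O2 }.

Arguments Dga2Ops {A O1 O2}.
Arguments addA {A O1 O2}. Arguments mulA {A O1 O2}. Arguments zeroA {A O1 O2}.
Arguments oneA {A O1 O2}. Arguments add1 {A O1 O2}. Arguments zero1 {A O1 O2}.
Arguments lmul1 {A O1 O2}. Arguments rmul1 {A O1 O2}. Arguments add2 {A O1 O2}.
Arguments zero2 {A O1 O2}. Arguments lmul2 {A O1 O2}. Arguments rmul2 {A O1 O2}.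
Arguments wedge {A O1 O2}. Arguments dA {A O1 O2}. Arguments d1 {A O1 O2}.

Definition span1 {A O1 O2} (D : dga2_ops A O1 O2) (s : list (A * A)) : O1 :=
  fold_right (fun p acc => add1 D (lmul1 D (fst p) (dA D (snd p))) acc) (zero1 D) s.

Definition span2 {A O1 O2} (D : dga2_ops A O1 O2) (s : list (A * A * A)) : O2 :=
  fold_right (fun p acc =>
      add2 D (lmul2 D (fst (fst p)) (wedge D (dA D (snd (fst p))) (dA D (snd p)))) acc)
    (zero2 D) s.

(* Axioms: part up to degree 2 of an exterior algebra (DGA generated by A and dA)
   over a unital F_2-algebra A.  Over F_2 all signs are irrelevant. *)
Record is_dga2 {A O1 O2} (D : dga2_ops A O1 O2) : Prop := {
  (* A : unital ring of characteristic 2 (= unital F_2-algebra) *)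
  A_addA : forall a b c, addA D a (addA D b c) = addA D (addA D a b) c;
  A_addC : forall a b, addA D a b = addA D b a;
  A_add0 : forall a, addA D a (zeroA D) = a;
  A_char2 : forall a, addA D a a = zeroA D;
  A_mulA : forall a b c, mulA D a (mulA D b c) = mulA D (mulA D a b) c;
  A_mul1l : forall a, mulA D (oneA D) a = a;
  A_mul1r : forall a, mulA D a (oneA D) = a;
  A_mulDl : forall a b c, mulA D (addA D a b) c = addA D (mulA D a c) (mulA D b c);
  A_mulDr : forall a b c, mulA D a (addA D b c) = addA D (mulA D a b) (mulA D a c);
  O1_addA : forall x y z, add1 D x (add1 D y z) = add1 D (add1 D x y) z;
  O1_addC : forall x y, add1 D x y = add1 D y x;
  O1_add0 : forall x, add1 D x (zero1 D) = x;
  O1_char2 : forall x, add1 D x x = zero1 D;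
  O1_lDa : forall a b x, lmul1 D (addA D a b) x = add1 D (lmul1 D a x) (lmul1 D b x);
  O1_lDx : forall a x y, lmul1 D a (add1 D x y) = add1 D (lmul1 D a x) (lmul1 D a y);
  O1_lM : forall a b x, lmul1 D (mulA D a b) x = lmul1 D a (lmul1 D b x);
  O1_l1 : forall x, lmul1 D (oneA D) x = x;
  O1_rDa : forall a b x, rmul1 D x (addA D a b) = add1 D (rmul1 D x a) (rmul1 D x b);
  O1_rDx : forall a x y, rmul1 D (add1 D x y) a = add1 D (rmul1 D x a) (rmul1 D y a);
  O1_rM : forall a b x, rmul1 D x (mulA D a b) = rmul1 D (rmul1 D x a) b;
  O1_r1 : forall x, rmul1 D x (oneA D) = x;
  O1_lr : forall a b x, rmul1 D (lmul1 D a x) b = lmul1 D a (rmul1 D x b);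
  O2_addA : forall x y z, add2 D x (add2 D y z) = add2 D (add2 D x y) z;
  O2_addC : forall x y, add2 D x y = add2 D y x;
  O2_add0 : forall x, add2 D x (zero2 D) = x;
  O2_char2 : forall x, add2 D x x = zero2 D;
  O2_lDa : forall a b x, lmul2 D (addA D a b) x = add2 D (lmul2 D a x) (lmul2 D b x);
  O2_lDx : forall a x y, lmul2 D a (add2 D x y) = add2 D (lmul2 D a x) (lmul2 D a y);
  O2_lM : forall a b x, lmul2 D (mulA D a b) x = lmul2 D a (lmul2 D b x);
  O2_l1 : forall x, lmul2 D (oneA D) x = x;
  O2_rDa : forall a b x, rmul2 D x (addA D a b) = add2 D (rmul2 D x a) (rmul2 D x b);
  O2_rDx : forall a x y, rmul2 D (add2 D x y) a = add2 D (rmul2 D x a) (rmul2 D y a);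
  O2_rM : forall a b x, rmul2 D x (mulA D a b) = rmul2 D (rmul2 D x a) b;
  O2_r1 : forall x, rmul2 D x (oneA D) = x;
  O2_lr : forall a b x, rmul2 D (lmul2 D a x) b = lmul2 D a (rmul2 D x b);
  W_Dl : forall x y z, wedge D (add1 D x y) z = add2 D (wedge D x z) (wedge D y z);
  W_Dr : forall x y z, wedge D x (add1 D y z) = add2 D (wedge D x y) (wedge D x z);
  W_l : forall a x y, wedge D (lmul1 D a x) y = lmul2 D a (wedge D x y);
  W_r : forall a x y, wedge D x (rmul1 D y a) = rmul2 D (wedge D x y) a;
  W_mid : forall a x y, wedge D (rmul1 D x a) y = wedge D x (lmul1 D a y);
  dA_add : forall a b, dA D (addA D a b) = add1 D (dA D a) (dA D b);
  dA_Leibniz : forall a b,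
    dA D (mulA D a b) = add1 D (rmul1 D (dA D a) b) (lmul1 D a (dA D b));
  d1_add : forall x y, d1 D (add1 D x y) = add2 D (d1 D x) (d1 D y);
  d1_Leibniz_l : forall a x,
    d1 D (lmul1 D a x) = add2 D (wedge D (dA D a) x) (lmul2 D a (d1 D x));
  d1_Leibniz_r : forall a x,
    d1 D (rmul1 D x a) = add2 D (rmul2 D (d1 D x) a) (wedge D x (dA D a));
  dd0 : forall a, d1 D (dA D a) = zero2 D;
  gen1 : forall x : O1, exists s, x = span1 D s;
  gen2 : forall w : O2, exists s, w = span2 D s }.

Record is_dga2_map {A O1 O2 B P1 P2}
    (D : dga2_ops A O1 O2) (E : dga2_ops B P1 P2)
    (f0 : A -> B) (f1 : O1 -> P1) (f2 : O2 -> P2) : Prop := {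
  f0_add : forall a b, f0 (addA D a b) = addA E (f0 a) (f0 b);
  f1_add : forall x y, f1 (add1 D x y) = add1 E (f1 x) (f1 y);
  f2_add : forall x y, f2 (add2 D x y) = add2 E (f2 x) (f2 y);
  f0_mul : forall a b, f0 (mulA D a b) = mulA E (f0 a) (f0 b);
  f1_lmul : forall a x, f1 (lmul1 D a x) = lmul1 E (f0 a) (f1 x);
  f1_rmul : forall a x, f1 (rmul1 D x a) = rmul1 E (f1 x) (f0 a);
  f2_lmul : forall a x, f2 (lmul2 D a x) = lmul2 E (f0 a) (f2 x);
  f2_rmul : forall a x, f2 (rmul2 D x a) = rmul2 E (f2 x) (f0 a);
  f2_wedge : forall x y, f2 (wedge D x y) = wedge E (f1 x) (f1 y);
  f_dA : forall a, f1 (dA D a) = dA E (f0 a);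
  f_d1 : forall x, f2 (d1 D x) = d1 E (f1 x) }.

Definition bar_ops {A O1 O2} (D : dga2_ops A O1 O2) (theta : O1) : dga2_ops A O1 O2 :=
  let th2 := wedge D theta theta in
  let a1 a := addA D a (oneA D) in
  Dga2Ops
    (fun a b => addA D (addA D a b) (oneA D))
    (fun a b => addA D (addA D (mulA D a b) a) b)
    (oneA D)                                                   (* bar zero = 1 *)
    (zeroA D)                                                  (* bar one = 0 *)
    (fun x y => add1 D (add1 D theta x) y)
    theta
    (fun a x => add1 D (lmul1 D a theta) (lmul1 D (a1 a) x))
    (fun x a => add1 D (rmul1 D theta a) (rmul1 D x (a1 a)))
    (fun x y => add2 D (add2 D th2 x) y)
    th2
    (fun a x => add2 D (lmul2 D a th2) (lmul2 D (a1 a) x))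
    (fun x a => add2 D (rmul2 D th2 a) (rmul2 D x (a1 a)))
    (fun x y => add2 D (add2 D (wedge D x y) (wedge D theta y)) (wedge D x theta))
    (fun a => add1 D theta (dA D a))
    (fun x => add2 D th2 (d1 D x)).

(* Main.v *)
Require Import Defs.
From Stdlib Require Import List.

Lemma span1_map {A O1 O2 B P1 P2} (D : dga2_ops A O1 O2) (E : dga2_ops B P1 P2)
  f0 f1 f2 (Hm : is_dga2_map D E f0 f1 f2) (z1 : f1 (zero1 D) = zero1 E) s :
  f1 (span1 D s) = span1 E (map (fun p => (f0 (fst p), f0 (snd p))) s).
Proof.
  induction s as [|p s IH]; simpl; [exact z1|].
  rewrite (f1_add _ _ _ _ _ Hm), (f1_lmul _ _ _ _ _ Hm), (f_dA _ _ _ _ _ Hm), IH.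
  reflexivity.
Qed.

Lemma span2_map {A O1 O2 B P1 P2} (D : dga2_ops A O1 O2) (E : dga2_ops B P1 P2)
  f0 f1 f2 (Hm : is_dga2_map D E f0 f1 f2) (z2 : f2 (zero2 D) = zero2 E) s :
  f2 (span2 D s) = span2 E (map (fun p => (f0 (fst (fst p)), f0 (snd (fst p)), f0 (snd p))) s).
Proof.
  induction s as [|p s IH]; simpl; [exact z2|].
  rewrite (f2_add _ _ _ _ _ Hm), (f2_lmul _ _ _ _ _ Hm), (f2_wedge _ _ _ _ _ Hm),
    !(f_dA _ _ _ _ _ Hm), IH.
  reflexivity.
Qed.

Lemma transport {A O1 O2 B P1 P2} (D : dga2_ops A O1 O2) (E : dga2_ops B P1 P2)
  f0 f1 f2 (HD : is_dga2 D) (Hm : is_dga2_map D E f0 f1 f2)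
  (z0 : f0 (zeroA D) = zeroA E) (o0 : f0 (oneA D) = oneA E)
  (z1 : f1 (zero1 D) = zero1 E) (z2 : f2 (zero2 D) = zero2 E)
  (s0 : forall b, exists a, b = f0 a) (s1 : forall b, exists a, b = f1 a)
  (s2 : forall b, exists a, b = f2 a) : is_dga2 E.
Proof.
  pose proof (f0_add _ _ _ _ _ Hm) as m1.
  pose proof (f1_add _ _ _ _ _ Hm) as m2.
  pose proof (f2_add _ _ _ _ _ Hm) as m3.
  pose proof (f0_mul _ _ _ _ _ Hm) as m4.
  pose proof (f1_lmul _ _ _ _ _ Hm) as m5.
  pose proof (f1_rmul _ _ _ _ _ Hm) as m6.
  pose proof (f2_lmul _ _ _ _ _ Hm) as m7.
  pose proof (f2_rmul _ _ _ _ _ Hm) as m8.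
  pose proof (f2_wedge _ _ _ _ _ Hm) as m9.
  pose proof (f_dA _ _ _ _ _ Hm) as m10.
  pose proof (f_d1 _ _ _ _ _ Hm) as m11.
  pose proof HD as HD0; destruct HD0.
  constructor;
  try (intros;
  repeat match goal with
  | x : B |- _ => destruct (s0 x) as [? ->]; clear x
  | x : P1 |- _ => destruct (s1 x) as [? ->]; clear x
  | x : P2 |- _ => destruct (s2 x) as [? ->]; clear x
  end;
  rewrite <- ?z0, <- ?o0, <- ?z1, <- ?z2;
  repeat (rewrite <- m1 || rewrite <- m2 || rewrite <- m3 || rewrite <- m4 ||
          rewrite <- m5 || rewrite <- m6 || rewrite <- m7 || rewrite <- m8 ||
          rewrite <- m9 || rewrite <- m10 || rewrite <- m11);
  apply f_equal; auto; fail).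
  - intro x. destruct (s1 x) as [y ->]. destruct (gen1 y) as [s ->].
    eexists. apply (span1_map _ _ _ _ _ Hm z1).
  - intro x. destruct (s2 x) as [y ->]. destruct (gen2 y) as [s ->].
    eexists. apply (span2_map _ _ _ _ _ Hm z2).
Qed.
Lemma ag_lemmas {G} (add : G -> G -> G) (z : G)
  (HA : forall x y w, add x (add y w) = add (add x y) w)
  (HC : forall x y, add x y = add y x)
  (H0 : forall x, add x z = x) (H2 : forall x, add x x = z) :
  (forall x y, add x (add x y) = y) /\
  (forall x y w, add x (add y w) = add y (add x w)) /\
  (forall x a b, add (add x a) (add x b) = add a b) /\
  (forall x a b, add (add x a) (add a b) = add x b) /\
  (forall p q r, add (add (add p q) r) p = add q r) /\
  (forall u v w, add (add u v) (add w u) = add w v).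
Proof.
  assert (C1 : forall x y, add x (add x y) = y).
  { intros. rewrite HA, H2, HC, H0. reflexivity. }
  assert (S : forall x y w, add x (add y w) = add y (add x w)).
  { intros. rewrite !HA, (HC x y). reflexivity. }
  repeat split; intros.
  - exact (C1 x y).
  - apply S.
  - rewrite <- HA. rewrite (S a x b), C1. reflexivity.
  - rewrite <- HA, C1. reflexivity.
  - rewrite HC, !HA, H2, (HC z q), H0. reflexivity.
  - rewrite (HC w u), <- HA, (S v u w), C1, HC. reflexivity.
Qed.

Lemma maps (A O1 O2 : Type) (D : dga2_ops A O1 O2) (theta : O1) :
  is_dga2 D ->
  d1 D theta = zero2 D ->
  is_dga2_map D (bar_ops D theta)
    (fun a => addA D (oneA D) a)
    (fun w => add1 D theta w)
    (fun w => add2 D (wedge D theta theta) w).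
Proof.
  intros HD Ht. destruct HD.
  destruct (ag_lemmas _ _ A_addA A_addC A_add0 A_char2) as (CA & SA & P1A & P2A & RA & QA).
  destruct (ag_lemmas _ _ O1_addA O1_addC O1_add0 O1_char2) as (C1 & S1 & P11 & P21 & R1 & Q1).
  destruct (ag_lemmas _ _ O2_addA O2_addC O2_add0 O2_char2) as (C2 & S2 & P12 & P22 & R2 & Q2).
  assert (d1z : dA D (oneA D) = zero1 D).
  { pose proof (dA_Leibniz (oneA D) (oneA D)) as H.
    rewrite A_mul1l, O1_r1, O1_l1, O1_char2 in H. exact H. }
  assert (a11 : forall a, addA D (addA D (oneA D) a) (oneA D) = a).
  { intro a. rewrite A_addC, CA. reflexivity. }
  constructor; intros; simpl.
  - rewrite P1A, A_addC. reflexivity.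
  - rewrite C1, S1. reflexivity.
  - rewrite C2, S2. reflexivity.
  - rewrite A_mulDl, A_mul1l, A_mulDr, A_mul1r, RA, QA. reflexivity.
  - rewrite a11, O1_lDa, O1_l1, O1_lDx, P21. reflexivity.
  - rewrite a11, O1_rDa, O1_r1, O1_rDx, P21. reflexivity.
  - rewrite a11, O2_lDa, O2_l1, O2_lDx, P22. reflexivity.
  - rewrite a11, O2_rDa, O2_r1, O2_rDx, P22. reflexivity.
  - rewrite !W_Dl, !W_Dr.
    rewrite (O2_addC (add2 D (add2 D (wedge D theta theta) (wedge D theta y)) _)
               (add2 D (wedge D theta theta) (wedge D theta y))), C2, Q2. reflexivity.
  - rewrite dA_add, d1z, (O1_addC (zero1 D)), O1_add0. reflexivity.
  - rewrite d1_add, Ht, (O2_addC (zero2 D)), O2_add0. reflexivity.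
Qed.

Theorem lemma5p4 (A O1 O2 : Type) (D : dga2_ops A O1 O2) (theta : O1) :
  is_dga2 D ->
  d1 D theta = zero2 D ->
  is_dga2 (bar_ops D theta) /\
  is_dga2_map D (bar_ops D theta)
    (fun a => addA D (oneA D) a)
    (fun w => add1 D theta w)
    (fun w => add2 D (wedge D theta theta) w).
Proof.
  intros HD Ht.
  pose proof (maps A O1 O2 D theta HD Ht) as Hm.
  split; [|exact Hm].
  destruct (ag_lemmas _ _ (A_addA D HD) (A_addC D HD) (A_add0 D HD) (A_char2 D HD)) as (CA & _).
  destruct (ag_lemmas _ _ (O1_addA D HD) (O1_addC D HD) (O1_add0 D HD) (O1_char2 D HD)) as (C1 & _).
  destruct (ag_lemmas _ _ (O2_addA D HD) (O2_addC D HD) (O2_add0 D HD) (O2_char2 D HD)) as (C2 & _).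
  apply (transport D _ _ _ _ HD Hm); simpl.
  - apply (A_add0 D HD).
  - apply (A_char2 D HD).
  - apply (O1_add0 D HD).
  - apply (O2_add0 D HD).
  - intro b. exists (addA D (oneA D) b). rewrite CA. reflexivity.
  - intro b. exists (add1 D theta b). rewrite C1. reflexivity.
  - intro b. exists (add2 D (wedge D theta theta) b). rewrite C2. reflexivity.
Qed.
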